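(* Let $x_v\geq0$ for $v\in\Lambda_N$ and let $\check h_v=h_v+x_v$ for $v\in\Lambda_N$. Then with probability 1, for every $v\in\mathcal C^{\Lambda_N}\cap\check{\mathcal C}^{\Lambda_N}$ there is a nearest-neighbor path in $\mathcal C^{\Lambda_N}\cap\check{\mathcal C}^{\Lambda_N}$ joining $v$ and $\partial\Lambda_N$ (i.e. starting at $v$ and ending at a vertex adjacent to $\partial\Lambda_N$).
   Context: Let $\{h_v:v\in\mathbb Z^2\}$ be i.i.d. Gaussian with mean zero and variance $\epsilon^2>0$. Write $u\sim v$ if $|u-v|_1=1$; $\partial A=\{v\in\mathbb Z^2\setminus A:u\sim v\text{ for some }u\in A\}$; $\Lambda_N=\{v\in\mathbb Z^2:|v|_\infty\le N\}$. For a field $g$ on $\Lambda_N$ and $\sigma\in\{-1,1\}^{\Lambda_N}$, $H^{\Lambda_N,\pm}_g(\sigma)=-\big(\sum_{u\sim v,\,u,v\in\Lambda_N}\sigma_u\sigma_v\pm\sum_{u\sim v,\,u\in\Lambda_N,v\in\partial\Lambda_N}\sigma_u+\sum_{u\in\Lambda_N}\sigma_ug_u\big)$ (each unordered pair counted once); $\sigma^{\Lambda_N,\pm}$ and $\check\sigma^{\Lambda_N,\pm}$ are the ground states (minimizers) for $g=h$ and $g=\check h$ respectively (unique a.s.). $\mathcal C^{\Lambda_N}=\{v:\sigma^{\Lambda_N,+}_v=1,\sigma^{\Lambda_N,-}_v=-1\}$ and $\check{\mathcal C}^{\Lambda_N}=\{v:\check\sigma^{\Lambda_N,+}_v=1,\check\sigma^{\Lambda_N,-}_v=-1\}$.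 *)

(* Defs.v *)
From HB Require Import structures.
From mathcomp Require Import all_boot all_order all_algebra.
From mathcomp Require Import all_classical all_reals all_analysis.
Set Implicit Arguments. Unset Strict Implicit. Unset Printing Implicit Defensive.
Import Order.TTheory GRing.Theory Num.Theory.
Local Open Scope classical_set_scope.
Local Open Scope ring_scope.

Definition vtx := (int * int)%type.

Definition adj (u v : vtx) : bool := `|u.1 - v.1| + `|u.2 - v.2| == 1.

Definition inLambda (N : nat) (v : vtx) : bool :=
  (`|v.1| <= N%:Z) && (`|v.2| <= N%:Z).

Definition rangeZ (N : nat) : seq int :=
  [seq (k%:Z - N%:Z) | k <- iota 0 (N.*2.+1)].
Definition Lambda (N : nat) : seq vtx :=
  [seq (i, j) | i <- rangeZ N, j <- rangeZ N].

Definition nbrs (u : vtx) : seq vtx :=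
  [:: (u.1 + 1, u.2); (u.1 - 1, u.2); (u.1, u.2 + 1); (u.1, u.2 - 1)].

Definition inBoundary (N : nat) (v : vtx) : bool :=
  ~~ inLambda N v && has (fun u => adj u v) (Lambda N).

(* spin configurations: true = +1, false = -1 (only values on Lambda_N matter) *)
Definition spin (R : ringType) (b : bool) : R := if b then 1 else -1.

(* H^{Lambda_N, +/-}_g(sigma); pm = true for "+", false for "-".
   The nearest-neighbour sum over unordered pairs is written as half the sum
   over ordered pairs. *)
Definition hamiltonian (R : realType) (N : nat) (pm : bool) (g : vtx -> R)
    (sigma : vtx -> bool) : R :=
  - ( 2^-1 * (\sum_(u <- Lambda N) \sum_(v <- Lambda N | adj u v)
                 spin R (sigma u) * spin R (sigma v))
      + spin R pm * (\sum_(u <- Lambda N)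
                        \sum_(v <- nbrs u | inBoundary N v && adj u v)
                           spin R (sigma u))
      + \sum_(u <- Lambda N) spin R (sigma u) * g u ).

Definition ground_state (R : realType) (N : nat) (pm : bool) (g : vtx -> R)
    (sigma : vtx -> bool) : Prop :=
  forall tau : vtx -> bool, hamiltonian N pm g sigma <= hamiltonian N pm g tau.

Definition disagree (N : nat) (sp sm : vtx -> bool) (v : vtx) : bool :=
  [&& inLambda N v, sp v & ~~ sm v].

Definition path_to_boundary (N : nat) (S : vtx -> bool) (v : vtx) : Prop :=
  exists p : seq vtx,
    [/\ path adj v p, all S (v :: p) &
        exists w, adj (last v p) w && inBoundary N w].

Definition iid_gaussian (R : realType) d (T : measurableType d)
    (P : probability T R) (h : vtx -> {RV P >-> R}) (eps : R) : Prop :=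
  (forall v (B : set R), measurable B ->
      P (h v @^-1` B) = normal_prob 0 eps B)
  /\ (forall (S : seq vtx) (B : vtx -> set R), uniq S ->
      (forall v, measurable (B v)) ->
      P (\bigcap_(v in [set` S]) (h v @^-1` B v)) =
      (\prod_(v <- S) P (h v @^-1` B v))%E).
Arguments iid_gaussian {R d T} P h eps.

(* Main.v *)
Require Import Defs.
From HB Require Import structures.
From mathcomp Require Import all_boot all_order all_algebra.
From mathcomp Require Import all_classical all_reals all_analysis.
From mathcomp Require Import measurable_realfun measurable_fun_approximation.
From mathcomp Require Import zify ring lra.
Set Implicit Arguments. Unset Strict Implicit. Unset Printing Implicit Defensive.
Import Order.TTheory GRing.Theory Num.Theory.
Local Open Scope classical_set_scope.
Local Open Scope ring_scope.
Lemma mem_rangeZ (N : nat) (z : int) : (z \in rangeZ N) = (`|z| <= N%:Z).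
Proof.
apply/mapP/idP.
  by move=> [k]; rewrite mem_iota add0n => /andP[_ kN] ->; lia.
move=> hz; exists (absz (z + N%:Z)); last by lia.
rewrite mem_iota add0n; apply/andP; split => //; lia.
Qed.

Lemma memLambda (N : nat) (u : vtx) : (u \in Lambda N) = inLambda N u.
Proof.
apply/allpairsP/idP.
  by move=> [[i j] /= [hi hj ->]]; rewrite /inLambda /= -!mem_rangeZ hi hj.
case: u => i j /andP[/= hi hj]; exists (i, j) => /=.
by rewrite !mem_rangeZ.
Qed.

Lemma adj_sym u v : adj u v = adj v u.
Proof. by rewrite /adj distrC [`|u.2 - _|]distrC. Qed.

Section Flip.
Variable R : realType.
Variable N : nat.

Definition strict (pm : bool) (g : vtx -> R) (s : vtx -> bool) : Prop :=
  forall t, hamiltonian N pm g t <= hamiltonian N pm g s ->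
    forall u, inLambda N u -> t u = s u.

Lemma pt_int (du dv su sv tu tv : bool) : (du -> su && ~~tu) -> (dv -> sv && ~~tv) ->
  (du -> ~~dv -> ~~(sv && ~~tv)) -> (dv -> ~~du -> ~~(su && ~~tu)) ->
  spin R su * spin R sv + spin R tu * spin R tv <=
  spin R (su && ~~du) * spin R (sv && ~~dv) + spin R (tu || du) * spin R (tv || dv).
Proof.
case: du; case: dv; case: su; case: sv; case: tu; case: tv => /= H1 H2 H3 H4;
  rewrite /spin; try lra;
  first [by move: (H1 erefl) | by move: (H2 erefl) | by move: (H3 erefl erefl)
        | by move: (H4 erefl erefl)].
Qed.

Lemma pt_bd (du su tu : bool) (s1 s2 : R) : (du -> su && ~~tu) -> (du -> s1 <= s2) ->
  s1 * spin R su + s2 * spin R tu <= s1 * spin R (su && ~~du) + s2 * spin R (tu || du).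
Proof.
case: du => [/(_ erefl)/andP[-> /negbTE ->] /(_ erefl) h | _ _] /=;
  rewrite ?andbT ?orbF /spin; lra.
Qed.

Lemma pt_fd (du su tu : bool) (s1 s2 : R) : (du -> su && ~~tu) -> (du -> s1 <= s2) ->
  spin R su * s1 + spin R tu * s2 <= spin R (su && ~~du) * s1 + spin R (tu || du) * s2.
Proof.
case: du => [/(_ erefl)/andP[-> /negbTE ->] /(_ erefl) h | _ _] /=;
  rewrite ?andbT ?orbF /spin; lra.
Qed.

Lemma flip_le b1 b2 (g1 g2 : vtx -> R) (s t D : vtx -> bool) :
  (forall u, D u -> s u && ~~ t u) ->
  (forall u, u \in Lambda N -> D u -> g1 u <= g2 u) ->
  (forall u v, u \in Lambda N -> v \in Lambda N -> adj u v -> D u -> ~~ D v ->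
     ~~ (s v && ~~ t v)) ->
  (forall u v, u \in Lambda N -> D u -> v \in nbrs u -> inBoundary N v -> adj u v ->
     spin R b1 <= spin R b2) ->
  hamiltonian N b1 g1 (fun u => s u && ~~ D u) + hamiltonian N b2 g2 (fun u => t u || D u)
  <= hamiltonian N b1 g1 s + hamiltonian N b2 g2 t.
Proof.
move=> hD hg hI hB.
have hI' : \sum_(u <- Lambda N) \sum_(v <- Lambda N | adj u v) spin R (s u) * spin R (s v)
  + \sum_(u <- Lambda N) \sum_(v <- Lambda N | adj u v) spin R (t u) * spin R (t v) <=
  \sum_(u <- Lambda N) \sum_(v <- Lambda N | adj u v) spin R (s u && ~~ D u) * spin R (s v && ~~ D v)
  + \sum_(u <- Lambda N) \sum_(v <- Lambda N | adj u v) spin R (t u || D u) * spin R (t v || D v).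
  rewrite -!big_split /= big_seq [leRHS]big_seq.
  apply: ler_sum => u uL; rewrite -!big_split /= big_seq_cond [leRHS]big_seq_cond.
  apply: ler_sum => v /andP[vL auv]; apply: pt_int.
  - exact: hD.
  - exact: hD.
  - by move=> du ndv; apply: (hI u v).
  - by move=> dv ndu; apply: (hI v u) => //; rewrite adj_sym.
have hB' : spin R b1 * (\sum_(u <- Lambda N) \sum_(v <- nbrs u | inBoundary N v && adj u v) spin R (s u))
   + spin R b2 * (\sum_(u <- Lambda N) \sum_(v <- nbrs u | inBoundary N v && adj u v) spin R (t u))
  <= spin R b1 * (\sum_(u <- Lambda N) \sum_(v <- nbrs u | inBoundary N v && adj u v) spin R (s u && ~~ D u))
   + spin R b2 * (\sum_(u <- Lambda N) \sum_(v <- nbrs u | inBoundary N v && adj u v) spin R (t u || D u)).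
  rewrite !big_distrr -!big_split /= big_seq [leRHS]big_seq.
  apply: ler_sum => u uL; rewrite !big_distrr -!big_split /= big_seq_cond [leRHS]big_seq_cond.
  apply: ler_sum => v /andP[vn /andP[bv auv]]; apply: pt_bd; first exact: hD.
  by move=> du; apply: (hB u v).
have hF' : \sum_(u <- Lambda N) spin R (s u) * g1 u + \sum_(u <- Lambda N) spin R (t u) * g2 u
  <= \sum_(u <- Lambda N) spin R (s u && ~~ D u) * g1 u + \sum_(u <- Lambda N) spin R (t u || D u) * g2 u.
  rewrite -!big_split /= big_seq [leRHS]big_seq.
  apply: ler_sum => u uL; apply: pt_fd; first exact: hD.
  by move=> du; apply: hg.
have h2 : (0 : R) <= 2^-1 by rewrite invr_ge0.
have := ler_wpM2l h2 hI'.
rewrite /hamiltonian /=.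
lra.
Qed.
End Flip.
Section Det.
Variable R : realType.
Variable N : nat.

Lemma flip_empty b1 b2 (g1 g2 : vtx -> R) (s t D : vtx -> bool) :
  ground_state N b1 g1 s -> strict N b1 g1 s -> ground_state N b2 g2 t ->
  (forall u, D u -> s u && ~~ t u) ->
  (forall u, u \in Lambda N -> D u -> g1 u <= g2 u) ->
  (forall u v, u \in Lambda N -> v \in Lambda N -> adj u v -> D u -> ~~ D v ->
     ~~ (s v && ~~ t v)) ->
  (forall u v, u \in Lambda N -> D u -> v \in nbrs u -> inBoundary N v -> adj u v ->
     spin R b1 <= spin R b2) ->
  forall u, inLambda N u -> ~~ D u.
Proof.
move=> gs ss gt hD hg hI hB u uL; apply/negP => Du.
have hle := flip_le hD hg hI hB.
have h1 := gt (fun u => t u || D u).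
have h2 : hamiltonian N b1 g1 (fun u => s u && ~~ D u) <= hamiltonian N b1 g1 s by lra.
have := ss _ h2 u uL; rewrite Du andbF.
by case/andP: (hD u Du) => ->.
Qed.

Lemma det (g x : vtx -> R) (sp sm csp csm : vtx -> bool) :
  (forall v, inLambda N v -> 0 <= x v) ->
  ground_state N true g sp -> strict N true g sp ->
  ground_state N false g sm -> strict N false g sm ->
  ground_state N true (fun v => g v + x v) csp ->
  ground_state N false (fun v => g v + x v) csm ->
  strict N false (fun v => g v + x v) csm ->
  let S := fun v => disagree N sp sm v && disagree N csp csm v in
  forall v, S v -> path_to_boundary N S v.
Proof.
move=> x0 gsp ssp gsm ssm gcsp gcsm scsm S v Sv.
have mono1 : forall u, inLambda N u -> sp u -> csp u.
  move=> u uL spu; apply: contraT => ncsp.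
  have := @flip_empty true true g (fun v => g v + x v) sp csp
    (fun u => [&& inLambda N u, sp u & ~~ csp u]) gsp ssp gcsp.
  move=> /(_ _ _ _ _ u uL); rewrite uL spu ncsp /=; apply => //.
  - by move=> w /and3P[]; rewrite /= => _ -> ->.
  - by move=> w wL /and3P[wL' _ _]; have := x0 w wL'; lra.
  - move=> w w' _ w'L _ _; rewrite -memLambda w'L /=.
    by apply: contra => ->.
have mono2 : forall u, inLambda N u -> sm u -> csm u.
  move=> u uL smu; apply: contraT => ncsm.
  have := @flip_empty false false g (fun v => g v + x v) sm csm
    (fun u => [&& inLambda N u, sm u & ~~ csm u]) gsm ssm gcsm.
  move=> /(_ _ _ _ _ u uL); rewrite uL smu ncsm /=; apply => //.
  - by move=> w /and3P[]; rewrite /= => _ -> ->.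
  - by move=> w wL /and3P[wL' _ _]; have := x0 w wL'; lra.
  - move=> w w' _ w'L _ _; rewrite -memLambda w'L /=.
    by apply: contra => ->.
apply: contrapT => npath.
pose reach u := exists p, [/\ path adj v p, all S (v :: p) & last v p = u].
have SL : forall u, S u -> [/\ inLambda N u, sp u & ~~ csm u].
  by move=> u /andP[/and3P[-> -> _] /and3P[_ _ ->]].
have reachS : forall u, reach u -> S u.
  move=> u [p [_ /allP aS <-]]; apply: aS; exact: mem_last.
have [vL _ _] := SL v Sv.
suff : ~~ `[< reach v >].
  by rewrite asboolT //; exists [::]; split => //=; rewrite Sv.
apply: (@flip_empty true false g (fun v => g v + x v) sp csm
    (fun u => `[< reach u >]) gsp ssp gcsm) => //.
- by move=> u /asboolP /reachS /SL [_ -> ->].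
- by move=> u _ /asboolP /reachS /SL [uL _ _]; have := x0 u uL; lra.
- move=> u w _ wL auw /asboolP [p [pp pS pl]] /asboolP nrw.
  apply/negP => /andP[spw ncsmw]; apply: nrw.
  have wL' : inLambda N w by rewrite -memLambda.
  have Sw : S w.
    apply/andP; split; apply/and3P; split => //.
    + by apply: contra ncsmw; apply: mono2.
    + exact: mono1.
  exists (rcons p w); split.
  + by rewrite rcons_path pp pl auw.
  + by rewrite -rcons_cons all_rcons Sw pS.
  + by rewrite last_rcons.
- move=> u w _ /asboolP [p [pp pS pl]] _ bw auw; exfalso; apply: npath.
  exists p; split => //; exists w; by rewrite pl auw bw.
Qed.
End Det.
Section Gen.
Variable R : realType.
Variable N : nat.

Lemma ham_dec pm (g : vtx -> R) s :
  hamiltonian N pm g s = hamiltonian N pm (fun=> 0) s - \sum_(u <- Lambda N) spin R (s u) * g u.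
Proof.
rewrite /hamiltonian.
have -> : \sum_(u <- Lambda N) spin R (s u) * 0 = 0 by rewrite big1 // => u _; rewrite mulr0.
rewrite addr0; lra.
Qed.

Lemma ham_ext pm (g : vtx -> R) s t :
  (forall u, u \in Lambda N -> s u = t u) -> hamiltonian N pm g s = hamiltonian N pm g t.
Proof.
move=> e; rewrite /hamiltonian; congr (- (_ * _ + _ * _ + _)).
- rewrite big_seq [RHS]big_seq; apply: eq_bigr => u uL.
  rewrite big_seq_cond [RHS]big_seq_cond; apply: eq_bigr => v /andP[vL _].
  by rewrite !e.
- rewrite big_seq [RHS]big_seq; apply: eq_bigr => u uL.
  by apply: eq_bigr => v _; rewrite e.
- by rewrite big_seq [RHS]big_seq; apply: eq_bigr => u uL; rewrite e.
Qed.

Definition cfg (s : seq bool) : vtx -> bool := fun u => nth false s (index u (Lambda N)).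

Definition Gen pm (g : vtx -> R) : Prop :=
  forall s t : seq bool, (exists u, inLambda N u /\ cfg s u != cfg t u) ->
    hamiltonian N pm g (cfg s) != hamiltonian N pm g (cfg t).

Lemma cfg_map (s : vtx -> bool) u : u \in Lambda N -> cfg (map s (Lambda N)) u = s u.
Proof.
move=> uL; rewrite /cfg (nth_map u) ?index_mem // nth_index //.
Qed.

Lemma gen_strict pm (g : vtx -> R) s : Gen pm g -> ground_state N pm g s -> strict N pm g s.
Proof.
move=> G gs t hle u uL; apply/eqP; apply: contraT => ne.
have uL' : u \in Lambda N by rewrite memLambda.
have := G (map t (Lambda N)) (map s (Lambda N)).
rewrite (ham_ext pm g (@cfg_map t)) (ham_ext pm g (@cfg_map s)).
have := gs t; move=> h1 h2.
have : hamiltonian N pm g t != hamiltonian N pm g s.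
  apply: h2; exists u; split => //; by rewrite !cfg_map.
by rewrite eq_le h1 hle.
Qed.
End Gen.
Section Normal.
Variable R : realType.
Local Open Scope ereal_scope.

Lemma normal_prob_itv_le (eps m r : R) : eps != 0%R -> (0 <= r)%R ->
  normal_prob 0 eps [set` `[m - r, m + r]%R] <= (normal_peak eps * (r *+ 2))%:E.
Proof.
move=> e0 r0; rewrite /normal_prob.
apply: (@le_trans _ _ (\int[lebesgue_measure]_(x in [set` `[m - r, m + r]%R]) (cst (normal_peak eps)%:E) x)).
  apply: ge0_le_integral => //=.
  all: try (by move=> x _; rewrite lee_fin normal_pdf_ge0).
  all: try (by move=> x _; rewrite lee_fin normal_pdf_ub).
  apply/measurable_realfun.measurable_EFinP; exact: (measurable_funTS (measurable_normal_pdf 0 eps)).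
rewrite (@integral_cst _ _ _ lebesgue_measure) //= lebesgue_measure_itv /=.
case: ifPn => _.
  rewrite -EFinD lee_fin; apply: ler_wpM2l; first exact: normal_peak_ge0.
  lra.
rewrite mule0 lee_fin; apply: mulr_ge0; first exact: normal_peak_ge0.
by rewrite mulrn_wge0.
Qed.
End Normal.
Section Core.
Variables (R : realType) (d : measure_display) (T : measurableType d)
  (P : probability T R) (h : vtx -> {RV P >-> R}) (eps : R).
Hypothesis eps0 : 0 < eps.
Hypothesis hiid : iid_gaussian P h eps.
Variables (u0 : vtx) (L : seq vtx) (a : vtx -> R) (a0 c : R).
Hypothesis uL : uniq (u0 :: L).
Hypothesis a00 : a0 != 0.

Definition cE := [set w | a0 * h u0 w + \sum_(v <- L) a v * h v w = c].

Lemma mcE : measurable cE.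
Proof.
have mf : measurable_fun setT (fun w => a0 * h u0 w + \sum_(v <- L) a v * h v w).
  apply: measurable_funD.
    by apply: measurable_funM => //; apply: measurable_funPT.
  apply: measurable_sum => v; apply: measurable_funM => //; apply: measurable_funPT.
have := mf measurableT [set c] (measurable_set1 c); rewrite setTI.
by [].
Qed.

Definition cell (del : R) (k : int) : set R := [set` `[k%:~R * del, (k + 1)%:~R * del[%R].

Definition idx v := index v L.

Definition Rect del (j : seq int) : set T :=
  if size j == size L then \bigcap_(v in [set` L]) (h v @^-1` cell del (nth 0 j (idx v)))
  else set0.

Definition mid del j := (c - \sum_(v <- L) a v * ((nth 0 j (idx v))%:~R * del)) / a0.
Definition rho del := (\sum_(v <- L) `|a v|) * del / `|a0|.
Definition Jset del j : set R := [set` `[mid del j - rho del, mid del j + rho del]%R].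
Definition Fn del n := if pickle_inv n is Some j then Rect del j else set0.
Definition Gn del n := if pickle_inv n is Some j then Rect del j `&` (h u0 @^-1` Jset del j)
  else set0.

Lemma cellP del k y : cell del k y = (k%:~R * del <= y < (k + 1)%:~R * del).
Proof. by rewrite /cell /= in_itv. Qed.

Lemma cell_floor del y : 0 < del -> cell del (Num.floor (y / del)) y.
Proof.
move=> d0; rewrite cellP; apply/andP; split.
  by rewrite -ler_pdivlMr //; exact: floor_le.
by rewrite -ltr_pdivrMr // -floor_lt_int ltzD1.
Qed.

Lemma cell_uniq del k k' y : 0 < del -> cell del k y -> cell del k' y -> k = k'.
Proof.
move=> d0; rewrite !cellP => /andP[a1 a2] /andP[b1 b2].
have h1 : k < k' + 1.
  by rewrite -(ltr_int R) -(ltr_pM2r d0); apply: le_lt_trans a1 b2.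
have h2 : k' < k + 1.
  by rewrite -(ltr_int R) -(ltr_pM2r d0); apply: le_lt_trans b1 a2.
by apply/eqP; rewrite eq_le -!ltzD1 h1 h2.
Qed.

Lemma uL' : uniq L. Proof. by case/andP: uL. Qed.
Lemma u0L : u0 \notin L. Proof. by case/andP: uL. Qed.

Lemma mRect del j : measurable (Rect del j).
Proof.
rewrite /Rect; case: ifP => _ //.
apply: fin_bigcap_measurable; first exact: finite_seq.
move=> v _; apply: measurable_funPTI; exact: measurable_itv.
Qed.

Lemma JsetP del j w : 0 < del -> Rect del j w -> cE w -> Jset del j (h u0 w).
Proof.
move=> d0; rewrite /Rect; case: ifP => // _ hR Ew.
rewrite /Jset /= in_itv /= -ler_distl.
have eh0 : h u0 w = (c - \sum_(v <- L) a v * h v w) / a0.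
  by rewrite -Ew; field.
have e2 : h u0 w - mid del j =
    (\sum_(v <- L) a v * ((nth 0 j (idx v))%:~R * del - h v w)) / a0.
  have e3 : \sum_(v <- L) a v * ((nth 0 j (idx v))%:~R * del - h v w) =
     \sum_(v <- L) a v * ((nth 0 j (idx v))%:~R * del) - \sum_(v <- L) a v * h v w.
    by rewrite -sumrB; apply: eq_bigr => v _; rewrite mulrBr.
  by rewrite e3 eh0 /mid; field.
rewrite e2 normrM normrV ?unitfE // /rho.
apply: ler_wpM2r; first by rewrite invr_ge0.
apply: le_trans (ler_norm_sum _ _ _) _.
rewrite big_distrl /= big_seq [leRHS]big_seq; apply: ler_sum => v vL.
rewrite normrM; apply: ler_wpM2l => //.
have := hR v vL; rewrite /= cellP intrD mulrDl mul1r => /andP[c1 c2].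
rewrite ler_norml; apply/andP; split; lra.
Qed.

Lemma cover del : 0 < del -> cE `<=` \bigcup_n Gn del n.
Proof.
move=> d0 w Ew.
pose j := map (fun v => Num.floor (h v w / del)) L.
have hR : Rect del j w.
  rewrite /Rect size_map eqxx => v /= vL.
  rewrite /idx (nth_map v) ?index_mem // nth_index //; exact: cell_floor.
exists (pickle j) => //; rewrite /Gn pickleK_inv; split => //.
exact: JsetP.
Qed.

Lemma trivF del : 0 < del -> trivIset setT (Fn del).
Proof.
move=> d0 i k _ _ [w [Fi Fk]].
move: Fi Fk; rewrite /Fn.
case ei: (pickle_inv i) => [ji|] //; case ek: (pickle_inv k) => [jk|] // Fi Fk.
have := @pickle_invK (seq int) i; rewrite ei /= => <-.
have := @pickle_invK (seq int) k; rewrite ek /= => <-.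
congr pickle.
move: Fi Fk; rewrite /Rect; case: eqP => // si; case: eqP => // sk Fi Fk.
apply: (@eq_from_nth _ 0); first by rewrite si sk.
move=> q qs; rewrite si in qs.
have vL : nth u0 L q \in L := mem_nth u0 qs.
have iv : idx (nth u0 L q) = q := index_uniq u0 qs uL'.
have := Fi _ vL; have := Fk _ vL; rewrite /= iv => c1 c2.
exact: cell_uniq d0 c2 c1.
Qed.

Lemma rho0 del : 0 < del -> 0 <= rho del.
Proof.
move=> d0; rewrite /rho; apply: mulr_ge0; last by rewrite invr_ge0.
apply: mulr_ge0; last exact: ltW.
by apply: sumr_ge0 => v _.
Qed.

Lemma Gn_le del n : 0 < del ->
  (P (Gn del n) <= (normal_peak eps * (rho del *+ 2))%:E * P (Fn del n))%E.
Proof.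
move=> d0; rewrite /Gn /Fn; case ej: (pickle_inv n) => [j|]; last by rewrite measure0 mule0.
have [sj|sj] := eqVneq (size j) (size L); last first.
  by rewrite /Rect (negbTE sj) set0I measure0 mule0.
pose B' v := if v == u0 then Jset del j else cell del (nth 0 j (idx v)).
have mB' : forall v, measurable (B' v).
  by move=> v; rewrite /B'; case: ifP => _; exact: measurable_itv.
have neq : forall v, v \in L -> (v == u0) = false.
  by move=> v vL; apply/negbTE; apply: contraNneq u0L => <-.
have eG : Rect del j `&` h u0 @^-1` Jset del j = \bigcap_(v in [set` u0 :: L]) (h v @^-1` B' v).
  rewrite /Rect sj eqxx; apply/seteqP; split => w.
    move=> [hR hJ] v /=; rewrite in_cons => /orP[/eqP ->|vL]; rewrite /B'.
      by rewrite eqxx.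
    rewrite neq //; exact: hR.
  move=> hall; split.
    move=> v /= vL; have := hall v; rewrite /= in_cons vL orbT /B' => /(_ erefl).
    by rewrite neq.
  by have := hall u0; rewrite /= mem_head /B' eqxx => /(_ erefl).
have eR : (\prod_(v <- L) P (h v @^-1` B' v) = P (Rect del j))%E.
  rewrite /Rect sj eqxx (hiid.2 L (fun v => cell del (nth 0 j (idx v))) uL'
     (fun v => measurable_itv _)).
  rewrite big_seq [RHS]big_seq; apply: eq_bigr => v vL.
  by rewrite /B' neq.
rewrite eG (hiid.2 _ _ uL mB') big_cons eR.
have -> : B' u0 = Jset del j by rewrite /B' eqxx.
apply: lee_wpmul2r; first exact: measure_ge0.
rewrite (hiid.1 u0 _ (measurable_itv _)).
apply: normal_prob_itv_le; first by rewrite gt_eqF.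
exact: rho0.
Qed.

Lemma PcE_le del : 0 < del -> (P cE <= (normal_peak eps * (rho del *+ 2))%:E)%E.
Proof.
move=> d0; set eta := normal_peak eps * _.
have mG n : measurable (Gn del n).
  rewrite /Gn; case: pickle_inv => [j|] //; apply: measurableI; first exact: mRect.
  apply: measurable_funPTI; exact: measurable_itv.
have mF n : measurable (Fn del n).
  by rewrite /Fn; case: pickle_inv => [j|] //; exact: mRect.
have eta0 : 0 <= eta.
  by apply: mulr_ge0; [exact: normal_peak_ge0 | apply: mulrn_wge0; exact: rho0].
apply: le_trans (measure_sigma_subadditive P mG mcE (cover d0)) _.
apply: (@le_trans _ _ (\sum_(n <oo) (eta%:E * P (Fn del n)))%E).
  apply: lee_nneseries; first by move=> n _ _; exact: measure_ge0.
  by move=> n _; exact: Gn_le.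
rewrite nneseriesZl; last by move=> n _; exact: measure_ge0.
have hF : (\sum_(n <oo) P (Fn del n) <= 1)%E.
  rewrite (@eq_eseriesl _ _ (fun i => i \in [set: nat])); last by move=> i; rewrite in_setT.
  rewrite -measure_bigcup //; last exact: trivF.
  apply: probability_le1; exact: bigcup_measurable.
have eta0E : (0 <= eta%:E)%E by rewrite lee_fin.
by have := lee_wpmul2l eta0E hF; rewrite mule1.
Qed.

Lemma PcE0 : P cE = 0%E.
Proof.
apply/eqP; rewrite eq_le measure_ge0 andbT.
apply/lee_addgt0Pr => e e0; rewrite add0e.
set S := \sum_(v <- L) `|a v|.
set K := normal_peak eps * (S / `|a0|) * 2.
have K0 : 0 <= K.
  apply: mulr_ge0 => //; apply: mulr_ge0; first exact: normal_peak_ge0.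
  by apply: mulr_ge0; [apply: sumr_ge0 | rewrite invr_ge0].
pose del := e / (K + 1).
have K1 : 0 < K + 1 by lra.
have d0 : 0 < del by apply: divr_gt0.
apply: le_trans (PcE_le d0) _; rewrite lee_fin.
have -> : normal_peak eps * (rho del *+ 2) = K * del.
  rewrite /K /rho -/S mulr2n.
  set z := `|a0|^-1; rewrite -[S * del / `|a0|]/(S * del * z) -[S / `|a0|]/(S * z).
  ring.
rewrite /del mulrA ler_pdivrMr //; nra.
Qed.

Lemma core_negl : P.-negligible cE.
Proof. by exists cE; split => //; [exact: mcE | exact: PcE0]. Qed.
End Core.
Lemma uniq_Lambda N : uniq (Lambda N).
Proof.
have ur : uniq (rangeZ N).
  rewrite map_inj_uniq ?iota_uniq // => k1 k2 /addIr /eqP; rewrite eqz_nat => /eqP.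
  by [].
apply: allpairs_uniq => // -[i1 j1] [i2 j2] _ _ /= [-> ->].
by [].
Qed.

Lemma spin_diff (R : realType) (b1 b2 : bool) : b1 != b2 -> spin R b1 - spin R b2 != 0.
Proof. by case: b1; case: b2 => //= _; rewrite /spin; apply/negP => /eqP H; lra. Qed.

Section AE.
Variables (R : realType) (d : measure_display) (T : measurableType d)
  (P : probability T R) (h : vtx -> {RV P >-> R}) (eps : R).
Hypothesis eps0 : 0 < eps.
Hypothesis hiid : iid_gaussian P h eps.

Lemma negl_sum (L : seq vtx) (u0 : vtx) (a : vtx -> R) (c : R) :
  uniq L -> u0 \in L -> a u0 != 0 ->
  P.-negligible [set w | \sum_(u <- L) a u * h u w = c].
Proof.
move=> uL u0L a0.
have pe := perm_to_rem u0L.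
have uL' : uniq (u0 :: rem u0 L) by rewrite -(perm_uniq pe).
have := @core_negl R d T P h eps eps0 hiid u0 (rem u0 L) a (a u0) c uL' a0.
apply: negligibleS => w /=; rewrite (perm_big _ pe) big_cons.
by [].
Qed.

Lemma ae_pair N pm (y : vtx -> R) (s t : seq bool) :
  {ae P, forall w, (exists u, inLambda N u /\ cfg N s u != cfg N t u) ->
     hamiltonian N pm (fun v => h v w + y v) (cfg N s) !=
     hamiltonian N pm (fun v => h v w + y v) (cfg N t)}.
Proof.
have [[u0 [u0L ne]]|nc] := pselect (exists u, inLambda N u /\ cfg N s u != cfg N t u);
  last by apply: aeW => w /nc.
set sg := cfg N s; set tg := cfg N t.
pose a u := spin R (sg u) - spin R (tg u).
pose c0 := hamiltonian N pm (fun=> 0) sg - hamiltonian N pm (fun=> 0) tg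
  - \sum_(u <- Lambda N) spin R (sg u) * y u + \sum_(u <- Lambda N) spin R (tg u) * y u.
have a0 : a u0 != 0.
  by apply: spin_diff.
have hn := negl_sum c0 (uniq_Lambda N) (u0 := u0) (a := a).
rewrite memLambda in hn; have := hn u0L a0.
apply: negligibleS => w /= hw.
have e : hamiltonian N pm (fun v => h v w + y v) sg = hamiltonian N pm (fun v => h v w + y v) tg.
  apply/eqP; apply: contrapT => nb; apply: hw => _; exact/negP.
rewrite (@ham_dec R N pm _ sg) (@ham_dec R N pm _ tg) in e.
have e1 : \sum_(u <- Lambda N) a u * h u w =
   \sum_(u <- Lambda N) spin R (sg u) * h u w - \sum_(u <- Lambda N) spin R (tg u) * h u w.
  by rewrite -sumrB; apply: eq_bigr => u _; rewrite /a mulrBl.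
have e2 : forall sg : vtx -> bool, \sum_(u <- Lambda N) spin R (sg u) * (h u w + y u) =
   \sum_(u <- Lambda N) spin R (sg u) * h u w + \sum_(u <- Lambda N) spin R (sg u) * y u.
  by move=> sg'; rewrite -big_split; apply: eq_bigr => u _; rewrite mulrDr.
rewrite !e2 in e.
rewrite e1 /c0; lra.
Qed.

Lemma ae_Gen N pm (y : vtx -> R) : {ae P, forall w, Gen N pm (fun v => h v w + y v)}.
Proof.
have step : forall n, {ae P, forall w, forall st : seq bool * seq bool, pickle st = n ->
  (exists u, inLambda N u /\ cfg N st.1 u != cfg N st.2 u) ->
     hamiltonian N pm (fun v => h v w + y v) (cfg N st.1) !=
     hamiltonian N pm (fun v => h v w + y v) (cfg N st.2)}.
  move=> n; case e: (@pickle_inv (seq bool * seq bool)%type n) => [st|].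
    have := @pickle_invK (seq bool * seq bool)%type n; rewrite e /= => hst.
    apply: filterS (ae_pair N pm y st.1 st.2) => w H st' hst'.
    have -> : st' = st by apply: (pcan_inj pickleK_inv); rewrite hst hst'.
    exact: H.
  apply: aeW => w st hst; exfalso.
  by move: e; rewrite -hst pickleK_inv.
apply: filterS (ae_foralln step) => w H s t.
exact: (H _ (s, t) erefl).
Qed.
End AE.

Theorem lemma2p5 (R : realType) (d : measure_display) (T : measurableType d)
    (P : probability T R) (h : vtx -> {RV P >-> R}) (eps : R) (N : nat)
    (x : vtx -> R) :
  0 < eps -> iid_gaussian P h eps ->
  (forall v, inLambda N v -> 0 <= x v) ->
  {ae P, forall omega,
    forall sp sm csp csm : vtx -> bool,
      ground_state N true (fun v => h v omega) sp ->
      ground_state N false (fun v => h v omega) sm ->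
      ground_state N true (fun v => h v omega + x v) csp ->
      ground_state N false (fun v => h v omega + x v) csm ->
      let S := fun v => disagree N sp sm v && disagree N csp csm v in
      forall v, S v -> path_to_boundary N S v}.
Proof.
move=> eps0 hiid x0.
have G1 := ae_Gen eps0 hiid N true (fun=> 0).
have G2 := ae_Gen eps0 hiid N false (fun=> 0).
have G3 := ae_Gen eps0 hiid N false x.
apply: filterS (filterI G1 (filterI G2 G3)) => w [g1 [g2 g3]] sp sm csp csm gsp gsm gcsp gcsm.
have e0 : (fun v => h v w + (fun=> (0 : R)) v) = (fun v => h v w).
  by apply/funext => v /=; rewrite addr0.
rewrite e0 in g1 g2.
exact: (det x0 gsp (gen_strict g1 gsp) gsm (gen_strict g2 gsm) gcsp gcsm (gen_strict g3 gcsm)).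
Qed.
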